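(* Let $D,d\ge 1$ and let $\theta\mapsto K_m(\theta)\in\mathbb{C}^{D\times D}$, $m=0,\dots,d-1$, be differentiable with $\sum_{m=0}^{d-1}K_m(\theta)^\dagger K_m(\theta)=\mathbb{1}_D$ for all $\theta$. Fix $\theta_0$, write $K_m=K_m(\theta_0)$, $\dot K_m=\partial_\theta K_m(\theta)|_{\theta_0}$, and let $\mathcal{E}(X)=\sum_m K_mXK_m^\dagger$. Suppose $\mathcal{E}$ has a fixed point, i.e. a density matrix $\rho_{ss}$ with $\mathcal{E}(\rho_{ss})=\rho_{ss}$. Define $$\alpha=\sum_m \mathrm{Tr}\big(\dot K_m\rho_{ss}\dot K_m^\dagger\big),\qquad \gamma=\sum_m\mathrm{Tr}\big(K_m\rho_{ss}\dot K_m^\dagger\big),$$ $$\beta_\tau=\mathrm{Tr}\Big[\sum_m \dot K_m\,\mathcal{E}^{\tau}\Big(\sum_n K_n\rho_{ss}\dot K_n^\dagger\Big)K_m^\dagger\Big]\quad(\tau\ge 0).$$ Then for every integer $T\ge 1$ the quantum Fisher information at $\theta_0$ of the $T$-site translation-invariant MPS state $|\Phi_T(\theta)\rangle$ (defined in the context) is $$F_T(\theta_0)=4\Big(T\alpha+2\sum_{\tau=0}^{T-2}(T-\tau-1)\,\mathrm{Re}\,\beta_\tau-T^2|\gamma|^2\Big).$$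
   Context: The isometry $V_\theta:\mathbb{C}^D\to\mathbb{C}^D\otimes\mathbb{C}^d$ is $V_\theta|\psi\rangle=\sum_m K_m(\theta)|\psi\rangle\otimes|m\rangle$; it generates a translation-invariant matrix product state (TI-MPS) with bond dimension $D$ and physical dimension $d$, whose transfer matrix is the channel $\mathcal{E}$. The $T$-site state with left boundary the identity (left fixed point of the transfer matrix) and right boundary $\rho_{ss}$ is realized as follows: let $|\xi\rangle\in\mathbb{C}^D_A\otimes\mathbb{C}^D_S$ be a fixed ($\theta$-independent) purification of $\rho_{ss}$ on an ancilla $A$, and set $|\Phi_T(\theta)\rangle=\sum_{m_1,\dots,m_T}(\mathbb{1}_A\otimes K_{m_T}(\theta)\cdots K_{m_1}(\theta))|\xi\rangle\otimes|m_1\cdots m_T\rangle$. For a pure-state family $|\psi_\theta\rangle$ the quantum Fisher information is $F=4(\langle\dot\psi|\dot\psi\rangle-|\langle\dot\psi|\psi\rangle|^2)$ with $|\dot\psi\rangle=\partial_\theta|\psi_\theta\rangle$. *)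

(* Defs.v *)
From HB Require Import structures.
From mathcomp Require Import all_boot all_order all_algebra.
From mathcomp Require Import complex.
From mathcomp Require Import all_classical all_reals all_analysis.
Set Implicit Arguments. Unset Strict Implicit. Unset Printing Implicit Defensive.
Import Order.TTheory GRing.Theory Num.Theory.
Local Open Scope ring_scope.

Section Defs.
Variable R : realType.
Local Notation C := R[i].

Definition adj m n (A : 'M[C]_(m, n)) : 'M[C]_(n, m) := (map_mx (@conjc R) A)^T.

Definition cderiv (f : R -> C) (t : R) : C :=
  ((derive1 (fun s => complex.Re (f s)) t)%:C + 'i * (derive1 (fun s => complex.Im (f s)) t)%:C)%C.

Definition cderivable (f : R -> C) (t : R) : Prop :=
  derivable (fun s => complex.Re (f s)) t 1 /\ derivable (fun s => complex.Im (f s)) t 1.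

Definition mderiv m n (A : R -> 'M[C]_(m, n)) (t : R) : 'M[C]_(m, n) :=
  \matrix_(i, j) cderiv (fun s => A s i j) t.

Definition channel D d (K : 'I_d -> 'M[C]_D) (X : 'M[C]_D) : 'M[C]_D :=
  \sum_(m < d) K m *m X *m adj (K m).

Definition density_matrix D (rho : 'M[C]_D) : Prop :=
  (forall v : 'cV[C]_D, 0 <= (adj v *m rho *m v) 0 0) /\ \tr rho = 1.

(* xi (row a = ancilla index, column s = system index) purifies rho:
   Tr_A |xi><xi| = rho, i.e. rho_{s s'} = sum_a xi_{a s} conj(xi_{a s'}) *)
Definition purifies D (xi : 'M[C]_D) (rho : 'M[C]_D) : Prop :=
  forall s s' : 'I_D, rho s s' = \sum_(a < D) xi a s * conjc (xi a s').

(* K_{m_T} ... K_{m_1} for ms = [:: m_1; ...; m_T] *)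
Definition kprod D d (K : 'I_d -> 'M[C]_D) (ms : seq 'I_d) : 'M[C]_D :=
  foldl (fun A m => K m *m A) 1%:M ms.

(* components of |Phi_T> = sum_{ms} (1_A (x) K_{m_T}...K_{m_1}) |xi> (x) |m_1...m_T> ,
   indexed by (a, s, (m_1,...,m_T)) *)
Definition mpsState D d T (K : 'I_d -> R -> 'M[C]_D) (xi : 'M[C]_D) (t : R)
  (idx : 'I_D * 'I_D * T.-tuple 'I_d) : C :=
  let: (a, s, ms) := idx in
  \sum_(s' < D) kprod (fun m => K m t) ms s s' * xi a s'.

Definition cinner (I : finType) (u v : I -> C) : C := \sum_(i : I) conjc (u i) * v i.

Definition qfi (I : finType) (psi : R -> I -> C) (t : R) : C :=
  let dpsi := fun i => cderiv (fun s => psi s i) t in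
  4%:R * (cinner dpsi dpsi - `|cinner dpsi (psi t)| ^+ 2).

End Defs.

(* Main.v *)
Require Import Defs.
From HB Require Import structures.
From mathcomp Require Import all_boot all_order all_algebra.
From mathcomp Require Import complex.
From mathcomp Require Import all_classical all_reals all_analysis.
From mathcomp Require Import ring.
Import Order.TTheory GRing.Theory Num.Theory.
Local Open Scope ring_scope.
Set Implicit Arguments. Unset Strict Implicit.

Section Deriv.
Variable R : realType.
Local Notation C := R[i].

Definition CD (f : R -> C) (t : R) (z : C) :=
  is_derive t (1:R) (fun s => complex.Re (f s)) (complex.Re z) /\
  is_derive t (1:R) (fun s => complex.Im (f s)) (complex.Im z).

Lemma CD_cderiv f t z : CD f t z -> cderiv f t = z.
Proof.
case=> h1 h2; rewrite /cderiv !derive1E.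
rewrite (@derive_val _ _ _ _ _ _ _ h1) (@derive_val _ _ _ _ _ _ _ h2).
by rewrite [RHS]complexE.
Qed.

Lemma cderivable_CD f t : cderivable f t -> CD f t (cderiv f t).
Proof.
case=> h1 h2; split.
  apply: is_derive_eq (derivableP h1) _; rewrite /cderiv derive1E /=. by rewrite !derive1E !(mul0r, mul1r, mulr0, subr0, addr0, add0r).
apply: is_derive_eq (derivableP h2) _; rewrite /cderiv derive1E /=. by rewrite !derive1E !(mul0r, mul1r, mulr0, subr0, addr0, add0r).
Qed.

Lemma CD_ext f g t z z' : CD f t z -> f =1 g -> z = z' -> CD g t z'.
Proof. by move=> h /funext <- <-. Qed.

Lemma CD_const c t : CD (fun _ => c) t 0.
Proof.
split; apply: is_derive_eq (is_derive_cst _ _ _) _ => //.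
Qed.

Lemma CD_add f g t x y : CD f t x -> CD g t y ->
  CD (fun s => f s + g s) t (x + y).
Proof.
case=> h1 h2 [h3 h4]; split.
  have -> : (fun s => complex.Re (f s + g s)) =
    (fun s => complex.Re (f s)) + (fun s => complex.Re (g s)).
    by apply/funext => s; rewrite !fctE /=; case: (f s) (g s) => a b [c d]; reflexivity.
  apply: is_derive_eq (is_deriveD h1 h3) _.
  by case: x y {h1 h2 h3 h4} => a b [c d].
have -> : (fun s => complex.Im (f s + g s)) =
  (fun s => complex.Im (f s)) + (fun s => complex.Im (g s)).
  by apply/funext => s; rewrite !fctE /=; case: (f s) (g s) => a b [c d]; reflexivity.
apply: is_derive_eq (is_deriveD h2 h4) _.
by case: x y {h1 h2 h3 h4} => a b [c d].
Qed.

Lemma CD_mul f g t x y : CD f t x -> CD g t y ->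
  CD (fun s => f s * g s) t (f t * y + x * g t).
Proof.
case=> h1 h2 [h3 h4]; split.
  have -> : (fun s => complex.Re (f s * g s)) =
    (fun s => complex.Re (f s)) * (fun s => complex.Re (g s))
    - (fun s => complex.Im (f s)) * (fun s => complex.Im (g s)).
    by apply/funext => s; rewrite !fctE /=; case: (f s) (g s) => a b [c d]; reflexivity.
  apply: is_derive_eq (is_deriveB (is_deriveM h1 h3) (is_deriveM h2 h4)) _.
  rewrite /=; case: x y (f t) (g t) {h1 h2 h3 h4} => a b [c d] [e k] [l n] /=.
  rewrite /GRing.scale /=; ring.
have -> : (fun s => complex.Im (f s * g s)) =
  (fun s => complex.Re (f s)) * (fun s => complex.Im (g s))
  + (fun s => complex.Im (f s)) * (fun s => complex.Re (g s)).
  by apply/funext => s; rewrite !fctE /=; case: (f s) (g s) => a b [c d]; reflexivity.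
apply: is_derive_eq (is_deriveD (is_deriveM h1 h4) (is_deriveM h2 h3)) _.
rewrite /=; case: x y (f t) (g t) {h1 h2 h3 h4} => a b [c d] [e k] [l n] /=.
rewrite /GRing.scale /=; ring.
Qed.

Lemma CD_sum n (F : 'I_n -> R -> C) t (z : 'I_n -> C) :
  (forall i, CD (F i) t (z i)) ->
  CD (fun s => \sum_(i < n) F i s) t (\sum_(i < n) z i).
Proof.
elim: n F z => [|n IH] F z h.
  apply: CD_ext (CD_const 0 t) _ _ => [s|]; by rewrite big_ord0.
have := CD_add (IH (fun i => F (widen_ord (leqnSn n) i)) (fun i => z (widen_ord (leqnSn n) i)) (fun i => h _)) (h ord_max).
move/CD_ext; apply => [s|]; first by rewrite big_ord_recr.
by rewrite big_ord_recr.
Qed.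

End Deriv.

Section Mat.
Variable R : realType.
Local Notation C := R[i].

Definition MD m n (A : R -> 'M[C]_(m, n)) (t : R) (Z : 'M[C]_(m, n)) :=
  forall i j, CD (fun s => A s i j) t (Z i j).

Lemma MD_mul m n p (A : R -> 'M[C]_(m, n)) (B : R -> 'M[C]_(n, p)) t X Y :
  MD A t X -> MD B t Y -> MD (fun s => A s *m B s) t (X *m B t + A t *m Y).
Proof.
move=> hA hB i j.
have := CD_sum (fun k => CD_mul (hA i k) (hB k j)).
move/CD_ext; apply => [s|]; first by rewrite !mxE.
rewrite !mxE -big_split /=; apply: eq_bigr => k _; exact: addrC.
Qed.

Lemma MD_const m n (M : 'M[C]_(m, n)) t : MD (fun _ => M) t 0.
Proof. by move=> i j; apply: CD_ext (CD_const (M i j) t) _ _ => //; rewrite mxE. Qed.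

Lemma kprod_foldl D d (A : 'I_d -> 'M[C]_D) ms X :
  foldl (fun (Y : 'M[C]_D) m => A m *m Y) X ms = kprod A ms *m X.
Proof.
elim: ms X => [|m ms IH] X /=; first by rewrite /kprod /= mul1mx.
rewrite IH [kprod A (m :: ms)]/kprod /= IH mulmx1 mulmxA.
reflexivity.
Qed.

Lemma kprod_cons D d (A : 'I_d -> 'M[C]_D) m ms :
  kprod A (m :: ms) = kprod A ms *m A m.
Proof. by rewrite {1}/kprod /= kprod_foldl mulmx1. Qed.

Fixpoint dk D d (A B : 'I_d -> 'M[C]_D) (ms : seq 'I_d) : 'M[C]_D :=
  match ms with
  | [::] => 0
  | m :: ms' => dk A B ms' *m A m + kprod A ms' *m B m
  end.

Lemma MD_kprod D d (K : 'I_d -> R -> 'M[C]_D) (Kd : 'I_d -> 'M[C]_D) t ms :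
  (forall m, MD (K m) t (Kd m)) ->
  MD (fun s => kprod (fun m => K m s) ms) t (dk (fun m => K m t) Kd ms).
Proof.
move=> hK; elim: ms => [|m ms IH] /=; first exact: MD_const.
have h := MD_mul IH (hK m).
by move=> i j; apply: CD_ext (h i j) _ _ => [s|] //; rewrite kprod_cons.
Qed.

Lemma cderivable_MD m n (A : R -> 'M[C]_(m, n)) t :
  (forall i j, cderivable (fun s => A s i j) t) -> MD A t (mderiv A t).
Proof.
by move=> h i j; apply: CD_ext (cderivable_CD (h i j)) _ _ => //; rewrite mxE.
Qed.

Lemma adjE m n (A : 'M[C]_(m, n)) i j : adj A i j = conjc (A j i).
Proof. by rewrite /adj !mxE. Qed.

Lemma adjM m n p (A : 'M[C]_(m, n)) (B : 'M[C]_(n, p)) :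
  adj (A *m B) = adj B *m adj A.
Proof.
apply/matrixP => i j; rewrite adjE !mxE rmorph_sum; apply: eq_bigr => k _.
by rewrite !adjE rmorphM mulrC.
Qed.

Lemma adjK m n (A : 'M[C]_(m, n)) : adj (adj A) = A.
Proof. by apply/matrixP => i j; rewrite /adj !mxE conjcK. Qed.

Lemma adjD m n (A B : 'M[C]_(m, n)) : adj (A + B) = adj A + adj B.
Proof. by apply/matrixP => i j; rewrite /adj !mxE rmorphD. Qed.

Lemma adj_sum m n (I : finType) (F : I -> 'M[C]_(m, n)) :
  adj (\sum_(i : I) F i) = \sum_(i : I) adj (F i).
Proof.
apply/matrixP => i j; rewrite adjE !summxE rmorph_sum.
by apply: eq_bigr => k _; rewrite adjE.
Qed.

Lemma tr_adj n (A : 'M[C]_n) : \tr (adj A) = conjc (\tr A).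
Proof. by rewrite /mxtrace rmorph_sum; apply: eq_bigr => i _; rewrite adjE. Qed.

Lemma tr_sum n (I : finType) (F : I -> 'M[C]_n) :
  \tr (\sum_(i : I) F i) = \sum_(i : I) \tr (F i).
Proof. exact: raddf_sum. Qed.

End Mat.

Section Tr.
Variable R : realType.
Local Notation C := R[i].
Variables (D d : nat) (Km Kd : 'I_d -> 'M[C]_D).
Hypothesis TP : \sum_(m < d) adj (Km m) *m Km m = 1%:M.
Local Notation E := (channel Km).
Local Notation P := (kprod Km).
Local Notation dP := (dk Km Kd).

Lemma big_tuple_cons n (F : seq 'I_d -> C) :
  \sum_(t : n.+1.-tuple 'I_d) F t = \sum_(m : 'I_d) \sum_(t : n.-tuple 'I_d) F (m :: t).
Proof.
rewrite pair_big /=.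
rewrite (reindex (fun p : 'I_d * n.-tuple 'I_d => [tuple of p.1 :: p.2])) //=.
exists (fun t : n.+1.-tuple 'I_d => (thead t, [tuple of behead t])) => [[m t] _ | t _].
  by congr pair; apply: val_inj.
by apply: val_inj; rewrite /= [in RHS](tuple_eta t).
Qed.

Lemma big_tuple0 (F : seq 'I_d -> C) : \sum_(t : 0.-tuple 'I_d) F t = F [::].
Proof. by rewrite (big_pred1 [tuple]) // => t /=; apply/esym/eqP; exact: tuple0. Qed.

Lemma adj1 : adj (1%:M : 'M[C]_D) = 1%:M.
Proof. by apply/matrixP => i j; rewrite /adj !mxE eq_sym rmorph_nat. Qed.

Lemma adj0 : adj (0 : 'M[C]_D) = 0.
Proof. by apply/matrixP => i j; rewrite /adj !mxE rmorph0. Qed.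

Lemma dk_cons m ms : dP (m :: ms) = dP ms *m Km m + P ms *m Kd m.
Proof. by []. Qed.

Lemma kprod_nil : P [::] = 1%:M.
Proof. by []. Qed.

Lemma tr_chan X : \tr (E X) = \tr X.
Proof.
rewrite /channel tr_sum.
under eq_bigr => m _ do rewrite mxtrace_mulC mulmxA.
by rewrite -tr_sum -mulmx_suml TP mul1mx.
Qed.

Lemma f_lem n X :
  \sum_(t : n.-tuple 'I_d) \tr (P t *m X *m adj (P t)) = \tr X.
Proof.
elim: n X => [|n IH] X.
  by rewrite (big_tuple0 (fun s => \tr (P s *m X *m adj (P s)))) kprod_nil adj1 mul1mx mulmx1.
rewrite (big_tuple_cons _ (fun s => \tr (P s *m X *m adj (P s)))) exchange_big /=.
rewrite -(tr_chan X) -(IH (E X)); apply: eq_bigr => t _.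
rewrite /channel mulmx_sumr mulmx_suml tr_sum; apply: eq_bigr => m _.
by rewrite kprod_cons adjM !mulmxA.
Qed.

Definition cc (Y : 'M[C]_D) := \tr (\sum_(m < d) Km m *m Y *m adj (Kd m)).
Definition cc' (Y : 'M[C]_D) := \tr (\sum_(m < d) Kd m *m Y *m adj (Km m)).

Lemma g_lem n Y :
  \sum_(t : n.-tuple 'I_d) \tr (P t *m Y *m adj (dP t)) = \sum_(k < n) cc (iter k E Y).
Proof.
elim: n Y => [|n IH] Y.
  by rewrite (big_tuple0 (fun s => \tr (P s *m Y *m adj (dP s)))) big_ord0 /= adj0 mulmx0 mxtrace0.
rewrite (big_tuple_cons _ (fun s => \tr (P s *m Y *m adj (dP s)))) exchange_big /=.
rewrite big_ord_recl /=.
under [X in _ = _ + X]eq_bigr => k _ do rewrite add0n -iterS iterSr.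
rewrite -(IH (E Y)) {1}/cc -(f_lem n) -big_split; apply: eq_bigr => t _ /=.
rewrite /channel !mulmx_sumr !mulmx_suml !tr_sum -big_split; apply: eq_bigr => m _ /=.
rewrite kprod_cons ?dk_cons adjD !adjM mulmxDr mxtraceD !mulmxA.
exact: addrC.
Qed.

Lemma g'_lem n Y :
  \sum_(t : n.-tuple 'I_d) \tr (dP t *m Y *m adj (P t)) = \sum_(k < n) cc' (iter k E Y).
Proof.
elim: n Y => [|n IH] Y.
  by rewrite (big_tuple0 (fun s => \tr (dP s *m Y *m adj (P s)))) big_ord0 /= mul0mx mul0mx mxtrace0.
rewrite (big_tuple_cons _ (fun s => \tr (dP s *m Y *m adj (P s)))) exchange_big /=.
rewrite big_ord_recl /=.
under [X in _ = _ + X]eq_bigr => k _ do rewrite add0n -iterS iterSr.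
rewrite -(IH (E Y)) {1}/cc' -(f_lem n) -big_split; apply: eq_bigr => t _ /=.
rewrite /channel !mulmx_sumr !mulmx_suml !tr_sum -big_split; apply: eq_bigr => m _ /=.
rewrite kprod_cons ?dk_cons !adjM mulmxDl !mulmxDl mxtraceD !mulmxA.
exact: addrC.
Qed.

Lemma h_step n Y :
  \sum_(t : n.+1.-tuple 'I_d) \tr (dP t *m Y *m adj (dP t)) =
  \sum_(t : n.-tuple 'I_d) \tr (dP t *m E Y *m adj (dP t))
  + \sum_(t : n.-tuple 'I_d) \tr (dP t *m (\sum_(m < d) Km m *m Y *m adj (Kd m)) *m adj (P t))
  + \sum_(t : n.-tuple 'I_d) \tr (P t *m (\sum_(m < d) Kd m *m Y *m adj (Km m)) *m adj (dP t))
  + \tr (\sum_(m < d) Kd m *m Y *m adj (Kd m)).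
Proof.
rewrite -(f_lem n (\sum_(m < d) Kd m *m Y *m adj (Kd m))) -!big_split.
rewrite (big_tuple_cons _ (fun s => \tr (dP s *m Y *m adj (dP s)))) exchange_big /=.
apply: eq_bigr => t _ /=.
rewrite /channel !mulmx_sumr !mulmx_suml !tr_sum -!big_split; apply: eq_bigr => m _ /=.
rewrite ?kprod_cons ?dk_cons adjD !adjM !mulmxDl !mulmxDr !mxtraceD !mulmxA.
ring.
Qed.

End Tr.

Section Fin.
Variable R : realType.
Local Notation C := R[i].

Lemma cinner_state D d T (A B : seq 'I_d -> 'M[C]_D) (xi rho : 'M[C]_D) :
  purifies xi rho ->
  cinner (fun i : 'I_D * 'I_D * T.-tuple 'I_d =>
            let: (a, s, ms) := i in \sum_(s' < D) A ms s s' * xi a s')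
         (fun i : 'I_D * 'I_D * T.-tuple 'I_d =>
            let: (a, s, ms) := i in \sum_(s' < D) B ms s s' * xi a s')
  = \sum_(t : T.-tuple 'I_d) \tr (B t *m rho *m adj (A t)).
Proof.
move=> hp; rewrite /cinner.
pose G (a s : 'I_D) (t : T.-tuple 'I_d) :=
  conjc (\sum_(s' < D) A t s s' * xi a s') * (\sum_(s' < D) B t s s' * xi a s').
transitivity (\sum_(p : 'I_D * 'I_D) \sum_(t : T.-tuple 'I_d) G p.1 p.2 t).
  by rewrite pair_big /=; apply: eq_bigr => [[[a s] t]] _.
rewrite -(pair_big xpredT xpredT (fun a s => \sum_(t : T.-tuple 'I_d) G a s t)) /=.
under eq_bigr => a _ do rewrite exchange_big.
rewrite exchange_big; apply: eq_bigr => t _ /=.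
rewrite exchange_big /mxtrace; apply: eq_bigr => s _ /=.
rewrite !mxE.
under [RHS]eq_bigr => j _ do rewrite !mxE.
under [RHS]eq_bigr => j _ do under eq_bigr => k _ do rewrite hp.
rewrite /G.
under eq_bigr => a _ do rewrite rmorph_sum mulr_suml.
rewrite exchange_big; apply: eq_bigr => j _ /=.
rewrite mulr_suml.
under [RHS]eq_bigr => k _ do rewrite mulr_sumr mulr_suml.
rewrite [RHS]exchange_big; apply: eq_bigr => a _ /=.
rewrite mulr_sumr; apply: eq_bigr => k _.
rewrite rmorphM; ring.
Qed.

Lemma reJ (z : C) : z + conjc z = 2%:R * 'Re z.
Proof.
by rewrite ReE mulrC divfK // pnatr_eq0.
Qed.

End Fin.

Section Tr2.
Variable R : realType.
Local Notation C := R[i].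
Variables (D d : nat) (Km Kd : 'I_d -> 'M[C]_D).
Local Notation E := (channel Km).

Lemma E_adj X : E (adj X) = adj (E X).
Proof.
rewrite /channel adj_sum; apply: eq_bigr => m _.
by rewrite !adjM adjK mulmxA.
Qed.

Lemma iter_adj k X : iter k E (adj X) = adj (iter k E X).
Proof. by elim: k => [|k IH] //=; rewrite IH E_adj. Qed.

Lemma cc_adj Z : cc Km Kd (adj Z) = conjc (cc' Km Kd Z).
Proof.
rewrite /cc /cc' -tr_adj adj_sum; congr (mxtrace _); apply: eq_bigr => m _.
by rewrite !adjM adjK mulmxA.
Qed.

Lemma iter_fix k X : E X = X -> iter k E X = X.
Proof. by move=> h; elim: k => [|k IH] //=; rewrite IH h. Qed.

End Tr2.


From mathcomp Require Import zify.
Unset Implicit Arguments.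

Theorem mainTheorem1 (R : realType) (D d : nat) (K : 'I_d -> R -> 'M[R[i]]_D)
  (theta0 : R) (rho xi : 'M[R[i]]_D) (T : nat) :
  (0 < D)%N -> (0 < d)%N ->
  (forall m i j t, cderivable (fun s => K m s i j) t) ->
  (forall t, \sum_(m < d) adj (K m t) *m K m t = 1%:M) ->
  density_matrix rho ->
  channel (fun m => K m theta0) rho = rho ->
  purifies xi rho ->
  (0 < T)%N ->
  let Km := fun m => K m theta0 in
  let Kd := fun m => mderiv (K m) theta0 in
  let E := channel Km in
  let alpha := \sum_(m < d) \tr (Kd m *m rho *m adj (Kd m)) in
  let gamma := \sum_(m < d) \tr (Km m *m rho *m adj (Kd m)) in
  let beta := fun tau : nat =>
    \tr (\sum_(m < d) Kd m *m iter tau E (\sum_(n < d) Km n *m rho *m adj (Kd n))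
                        *m adj (Km m)) in
  qfi (mpsState (T := T) K xi) theta0 =
  4%:R * (T%:R * alpha
          + 2%:R * \sum_(0 <= tau < T.-1) (T - tau - 1)%:R * 'Re (beta tau)
          - (T ^ 2)%:R * `|gamma| ^+ 2).
Proof.
move=> D0 d0 hK hTP hrho hfix hpur T0 Km Kd E alpha gamma beta.
have TP : \sum_(m < d) adj (Km m) *m Km m = 1%:M := hTP theta0.
have hMD : forall m, MD (K m) theta0 (Kd m) :=
  fun m => cderivable_MD (fun i j => hK m i j theta0).
have dpsiE : forall i, cderiv (fun s => mpsState (T:=T) K xi s i) theta0 =
   (let: (a, s, ms) := i in \sum_(s' < D) dk Km Kd ms s s' * xi a s').
  case=> [[a s] ms]; apply: CD_cderiv => /=.
  apply: CD_sum => s'.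
  apply: CD_ext (CD_mul (MD_kprod ms hMD s s') (CD_const (xi a s') theta0)) _ _ => //.
  by rewrite mulr0 add0r.
have rhoH : adj rho = rho.
  apply/matrixP => i j; rewrite /adj !mxE !hpur rmorph_sum; apply: eq_bigr => a _.
  by rewrite rmorphM /= conjcK mulrC.
rewrite /qfi.
rewrite (_ : (fun i => cderiv (fun s => mpsState (T:=T) K xi s i) theta0) =
  (fun i : 'I_D * 'I_D * T.-tuple 'I_d =>
     let: (a, s, ms) := i in \sum_(s' < D) dk Km Kd ms s s' * xi a s')); last first.
  apply: funext => i. have := dpsiE i. move=> H. exact H.
rewrite (cinner_state T (dk Km Kd) (dk Km Kd) hpur).
rewrite (cinner_state T (dk Km Kd) (kprod Km) hpur).
rewrite (g_lem Kd TP T rho).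
have -> : \sum_(k < T) cc Km Kd (iter k E rho) = T%:R * gamma.
  rewrite (eq_bigr (fun _ => gamma)); last by move=> k _; rewrite iter_fix // /cc tr_sum.
  by rewrite sumr_const card_ord mulr_natl.
have Y1E : \sum_(m < d) Kd m *m rho *m adj (Km m) =
    adj (\sum_(m < d) Km m *m rho *m adj (Kd m)).
  by rewrite adj_sum; apply: eq_bigr => m _; rewrite !adjM adjK rhoH mulmxA.
have hh : forall n, \sum_(t : n.-tuple 'I_d) \tr (dk Km Kd t *m rho *m adj (dk Km Kd t))
   = n%:R * alpha + \sum_(tau < n) (n - tau - 1)%:R * (beta tau + conjc (beta tau)).
  elim => [|n IH].
    rewrite (big_tuple0 (fun s => \tr (dk Km Kd s *m rho *m adj (dk Km Kd s)))).
    by rewrite big_ord0 /= mul0mx mul0mx mxtrace0 mul0r addr0.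
  rewrite (h_step Kd TP) hfix IH (g'_lem Kd TP) (g_lem Kd TP) Y1E.
  under [X in _ + _ + X + _ = _]eq_bigr => k _ do rewrite iter_adj cc_adj.
  have eb : forall k, cc' Km Kd (iter k (channel Km)
      (\sum_(m < d) Km m *m rho *m adj (Kd m))) = beta k by [].
  under [X in _ + X + _ + _ = _]eq_bigr => k _ do rewrite eb.
  under [X in _ + X + _ = _]eq_bigr => k _ do rewrite eb.
  rewrite tr_sum -/alpha.
  rewrite [X in _ = _ + X]big_ord_recr /= subSnn subnn mul0r addr0.
  rewrite [X in _ = _ + X](eq_bigr (fun i : 'I_n => (n - i - 1)%:R * (beta i + conjc (beta i))
      + (beta i + conjc (beta i)))); last first.
    move=> i _ /=.
    have -> : (n.+1 - i - 1 = (n - i - 1).+1)%N by have := ltn_ord i; lia.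
    by rewrite -natr1 mulrDl mul1r.
  rewrite !big_split /= -natr1; ring.
rewrite hh normrM normr_nat exprMn natrX.
under eq_bigr => tau _ do rewrite reJ.
congr (_ * (_ + _ - _)).
rewrite mulr_sumr -(big_mkord xpredT (fun tau => (T - tau - 1)%:R * (2%:R * 'Re (beta tau)))).
have -> : forall F : nat -> R[i], \sum_(0 <= i < T) F i = \sum_(0 <= i < T.-1) F i + F T.-1.
  by move=> F; rewrite -{1}(prednK T0) big_nat_recr.
have -> : (T - T.-1 - 1 = 0)%N by lia.
rewrite mul0r addr0; apply: eq_bigr => i _; exact: mulrCA.
Qed.
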